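(* Let $w$ be a permutation with $\textsf{supp}(w)=X\sqcup Y$ such that either (1) every $x\in X$ commutes with every $y\in Y$ (i.e. $|x-y|\ne1$), in which case let $s$ be any reduced word of $w$; or (2) there is exactly one pair $(x_0,y_0)\in X\times Y$ of noncommuting letters (i.e. with $|x_0-y_0|=1$), and there is a reduced word $s$ of $w$ in which all occurrences of $x_0$ are to the left of all occurrences of $y_0$. Then the subwords $s_X$ and $s_Y$ of $s$ consisting of all letters from $X$, respectively $Y$, are reduced words, and $B(w)\cong B([s_X])\times B([s_Y])$ as posets.
   Context: $\sigma_i=(i,i+1)$; reduced words are sequences of subscripts of reduced expressions, and $[t]$ denotes the permutation represented by a word $t$. $\textsf{supp}(w)$ is the set of letters appearing in reduced words of $w$. $B(u)$ is the principal order ideal of $u$ in the Bruhat order. *)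

(* Defs.v *)
(* Symmetric group S_{n+1} = {perm 'I_n.+1}, generators
   sigma_i = (i, i+1) for i < n. *)
From Stdlib Require Import Relations.
From mathcomp Require Import all_boot all_fingroup.

Local Open Scope group_scope.

Definition sigma (n i : nat) : {perm 'I_n.+1} :=
  tperm (inord i : 'I_n.+1) (inord i.+1).

Definition word_perm (n : nat) (t : seq nat) : {perm 'I_n.+1} :=
  \prod_(i <- t) sigma n i.

(* Coxeter length = number of inversions *)
Definition perm_length (n : nat) (w : {perm 'I_n.+1}) : nat :=
  #|[set ij : 'I_n.+1 * 'I_n.+1 | (ij.1 < ij.2)%N && (w ij.2 < w ij.1)%N]|.

Definition valid_word (n : nat) (t : seq nat) : bool := all (fun i => i < n) t.

Definition reduced (n : nat) (t : seq nat) : Prop :=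
  valid_word n t /\ size t = perm_length n (word_perm n t).

Definition reduced_word_of (n : nat) (t : seq nat) (w : {perm 'I_n.+1}) : Prop :=
  reduced n t /\ word_perm n t = w.

Definition supp (n : nat) (w : {perm 'I_n.+1}) (i : nat) : Prop :=
  exists t, reduced_word_of n t w /\ i \in t.

Definition bruhat_step (n : nat) (u v : {perm 'I_n.+1}) : Prop :=
  exists i j : 'I_n.+1, i != j /\ v = u * tperm i j /\ perm_length n u < perm_length n v.

Definition bruhat_le (n : nat) : relation {perm 'I_n.+1} :=
  clos_refl_trans _ (bruhat_step n).

Definition Bideal (n : nat) (u : {perm 'I_n.+1}) : Type :=
  {x : {perm 'I_n.+1} | bruhat_le n x u}.

Definition poset_iso_prod (n : nat) (w a b : {perm 'I_n.+1}) : Prop :=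
  exists f : Bideal n w -> (Bideal n a * Bideal n b)%type,
    bijective f /\
    forall x y : Bideal n w,
      bruhat_le n (sval x) (sval y) <->
      (bruhat_le n (sval (f x).1) (sval (f y).1) /\
       bruhat_le n (sval (f x).2) (sval (f y).2)).

Definition commuting (x y : nat) : Prop := x.+1 <> y /\ y.+1 <> x.

(* Main.v *)
Require Import Defs.
From mathcomp Require Import all_boot all_fingroup.
From Stdlib Require Import Relations Lia Classical ProofIrrelevance IndefiniteDescription.
From mathcomp Require Import zify.

Set Implicit Arguments. Unset Strict Implicit. Unset Printing Implicit Defensive.
Local Open Scope group_scope.


Lemma sigmaE n a : sigma n a = tperm (inord a : 'I_n.+1) (inord a.+1). Proof. by []. Qed.

Lemma word_perm_nil n : word_perm n [::] = 1.
Proof. by rewrite /word_perm big_nil. Qed.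
Lemma word_perm_cons n c t : word_perm n (c :: t) = sigma n c * word_perm n t.
Proof. by rewrite /word_perm big_cons. Qed.
Lemma word_perm_cat n t1 t2 : word_perm n (t1 ++ t2) = word_perm n t1 * word_perm n t2.
Proof. by rewrite /word_perm big_cat. Qed.
Lemma word_perm_rcons n t c : word_perm n (rcons t c) = word_perm n t * sigma n c.
Proof. by rewrite -cats1 word_perm_cat word_perm_cons word_perm_nil mulg1. Qed.

Lemma sigmaV n a : (sigma n a)^-1 = sigma n a. Proof. exact: tpermV. Qed.
Lemma sigmaK n a : sigma n a * sigma n a = 1.
Proof. by apply/permP=> z; rewrite permM /sigma tpermK perm1. Qed.

Lemma word_perm_rev n t : word_perm n (rev t) = (word_perm n t)^-1.
Proof.
elim: t => [|c t IH]; first by rewrite word_perm_nil invg1.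
by rewrite rev_cons word_perm_rcons IH word_perm_cons invMg sigmaV.
Qed.

Lemma ne_val n (x : 'I_n.+1) m : m < n.+1 -> x <> inord m -> nat_of_ord x <> m.
Proof. by move=> hm hx e; apply: hx; apply/val_inj; rewrite /= inordK. Qed.

Lemma flip n a (P Q : 'I_n.+1) : a < n -> (P < Q)%N ->
  (sigma n a Q < sigma n a P)%N -> P = inord a /\ Q = inord a.+1.
Proof.
move=> an PQ.
have vA : nat_of_ord (inord a : 'I_n.+1) = a by rewrite inordK // ltnW.
have vB : nat_of_ord (inord a.+1 : 'I_n.+1) = a.+1 by rewrite inordK.
rewrite /sigma.
case: tpermP => [eP|eP|nPA nPB]; case: tpermP => [eQ|eQ|nQA nQB]; subst;
 rewrite ?vA ?vB => h; try by split.
all: repeat match goal with H : ?x <> inord ?m |- _ => apply ne_val in H; [|lia] end.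
all: exfalso; move: PQ h; rewrite ?vA ?vB; lia.
Qed.

Lemma inordA n a : a < n -> nat_of_ord (inord a : 'I_n.+1) = a.
Proof. by move=> an; rewrite inordK // ltnW. Qed.
Lemma inordB n a : a < n -> nat_of_ord (inord a.+1 : 'I_n.+1) = a.+1.
Proof. by move=> an; rewrite inordK. Qed.

Lemma ord_neq k (x y : 'I_k) : x != y -> (x < y)%N || (y < x)%N.
Proof. by rewrite -val_eqE neq_ltn. Qed.

Lemma sigma_inj n a : injective (sigma n a). Proof. exact: perm_inj. Qed.

Lemma length_sigma_up n (y : {perm 'I_n.+1}) a : a < n ->
  (y^-1 (inord a) < y^-1 (inord a.+1))%N ->
  perm_length n (y * sigma n a) = (perm_length n y).+1.
Proof.
move=> an ord.
set A : 'I_n.+1 := inord a; set B : 'I_n.+1 := inord a.+1.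
have AB : A != B.
  by apply/eqP => /(congr1 (@nat_of_ord _)); rewrite /A /B (inordA an) (inordB an); lia.
have sA : sigma n a A = B by rewrite /sigma tpermL.
have sB : sigma n a B = A by rewrite /sigma tpermR.
set pA := y^-1 A; set pB := y^-1 B.
have inv_new : [set ij : 'I_n.+1 * 'I_n.+1 | (ij.1 < ij.2)%N && (((y * sigma n a)%g ij.2 : nat) < (y * sigma n a)%g ij.1)%N]
   = (pA, pB) |: [set ij : 'I_n.+1 * 'I_n.+1 | (ij.1 < ij.2)%N && (y ij.2 < y ij.1)%N].
  apply/setP => [[i j]]; rewrite !inE /= !permM.
  case: (eqVneq (i, j) (pA, pB)) => [[-> ->]|ne] /=.
    by rewrite ord /pA /pB !permKV sA sB /A /B (inordA an) (inordB an) ltnSn.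
  case ij: (i < j)%N => //=.
  have uv : y i != y j.
    by apply/eqP=> /perm_inj e; move: ij; rewrite e ltnn.
  case h1: (sigma n a (y j) < sigma n a (y i))%N; case h2: (y j < y i)%N => //.
  - exfalso. have uv' : (y i < y j)%N.
      by move: h2 uv; rewrite -val_eqE /=; lia.
    have [e1 e2] := flip an uv' h1.
    by move: ne; rewrite /pA /pB /A /B -e1 -e2 !permK eqxx.
  - exfalso.
    have h1' : (sigma n a (y i) < sigma n a (y j))%N.
      have : sigma n a (y i) != sigma n a (y j).
        by apply/eqP => /sigma_inj /eqP; rewrite (negbTE uv).
      by move/ord_neq; move: h1; lia.
    have [e1 e2] := flip an h2 h1'.
    have : (pB < pA)%N by rewrite /pA /pB /A /B -e1 -e2 !permK.
    by rewrite /pA /pB /A /B; move: ord; lia.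
rewrite /perm_length inv_new cardsU1 inE /= ord /pA /pB !permKV /=.
have -> : (B < A)%N = false by rewrite /A /B (inordA an) (inordB an); lia.
by rewrite add1n.
Qed.

Lemma length_sigma n (y : {perm 'I_n.+1}) a : a < n ->
  if (y^-1 (inord a) < y^-1 (inord a.+1))%N
  then perm_length n (y * sigma n a) = (perm_length n y).+1
  else (perm_length n (y * sigma n a)).+1 = perm_length n y.
Proof.
move=> an; case: ifP => h; first exact: length_sigma_up.
set A : 'I_n.+1 := inord a; set B : 'I_n.+1 := inord a.+1.
have AB : A != B.
  by apply/eqP => /(congr1 (@nat_of_ord _)); rewrite /A /B (inordA an) (inordB an); lia.
have h' : ((y * sigma n a)^-1 A < (y * sigma n a)^-1 B)%N.
  rewrite invMg !permM sigmaV /sigma tpermL tpermR.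
  have : y^-1 A != y^-1 B by apply/eqP => /perm_inj /eqP; rewrite (negbTE AB).
  by move/ord_neq => /orP[h2|//]; rewrite /A /B h2 in h.
have := length_sigma_up an h'.
by rewrite -mulgA sigmaK mulg1 => ->.
Qed.

Lemma length_sigma_le n (y : {perm 'I_n.+1}) a : a < n ->
  perm_length n (y * sigma n a) <= (perm_length n y).+1.
Proof. by move=> an; have := length_sigma y an; case: ifP => _ e; lia. Qed.

Lemma length_word n t : valid_word n t -> perm_length n (word_perm n t) <= size t.
Proof.
elim/last_ind: t => [|t c IH].
  move=> _; rewrite word_perm_nil /perm_length leqn0 cards_eq0.
  apply/eqP/setP => ij; rewrite !inE !perm1.
  by case: ltngtP.
rewrite /valid_word all_rcons => /andP[cn vt].
rewrite word_perm_rcons size_rcons.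
apply: leq_trans (length_sigma_le _ cn) _; exact: IH.
Qed.

Lemma length_sigma_ge n (y : {perm 'I_n.+1}) a : a < n ->
  perm_length n y <= (perm_length n (y * sigma n a)).+1.
Proof. by move=> an; have := length_sigma y an; case: ifP => _ e; lia. Qed.

Lemma F2 n d : forall (y : {perm 'I_n.+1}) (i j : 'I_n.+1), nat_of_ord j = i + d.+1 ->
  (y^-1 i < y^-1 j)%N -> perm_length n y < perm_length n (y * tperm i j).
Proof.
elim: d => [|d IH] y i j eji lt.
  have an : nat_of_ord i < n by move: (ltn_ord j); lia.
  have ei : i = inord i by rewrite inord_val.
  have ej : j = inord i.+1 by apply/val_inj; rewrite /= inordK //; lia.
  have -> : tperm i j = sigma n i by rewrite /sigma -ei -ej.
  by rewrite (length_sigma_up an) // -ei -ej.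
set a := nat_of_ord i.
have an : a < n by move: (ltn_ord j); rewrite /a; lia.
have ei : i = inord a by rewrite inord_val.
set i' : 'I_n.+1 := inord a.+1.
have vi' : nat_of_ord i' = a.+1 by rewrite /i' inordB.
have si' : sigma n a i' = i by rewrite /sigma tpermR -ei.
have si : sigma n a i = i' by rewrite /sigma -ei tpermL.
have sj : sigma n a j = j.
  rewrite /sigma tpermD //; apply/eqP => /(congr1 (@nat_of_ord _));
  rewrite ?(inordA an) ?(inordB an); rewrite /a in eji *; lia.
have tau : tperm i j = sigma n a * tperm i' j * sigma n a.
  by have := tpermJ i' j (sigma n a); rewrite si' sj /conjg sigmaV mulgA => <-.
have ji' : nat_of_ord j = i' + d.+1 by rewrite vi'; rewrite /a in eji *; lia.
have ii' : y^-1 i != y^-1 i'.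
  apply/eqP => /perm_inj /(congr1 (@nat_of_ord _)); rewrite vi'; rewrite /a; lia.
set y1 := y * sigma n a.
have y1i' : y1^-1 i' = y^-1 i by rewrite /y1 invMg permM sigmaV si'.
have y1j : y1^-1 j = y^-1 j by rewrite /y1 invMg permM sigmaV sj.
have IH1 : perm_length n y1 < perm_length n (y1 * tperm i' j).
  by apply: IH => //; rewrite y1i' y1j.
rewrite tau !mulgA -/y1.
have g3 := length_sigma_ge (y1 * tperm i' j) an.
case/ord_neq/orP: ii' => h.
- have := length_sigma_up an; rewrite -ei -/i' => /(_ y h); rewrite -/y1 => e1.
  apply: (@leq_trans (perm_length n y1)); first by rewrite e1.
  by rewrite -ltnS (leq_trans IH1 g3).
- have e1 := length_sigma y an; rewrite -ei -/i' -/y1 in e1.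
  have hf : (y^-1 i < y^-1 i')%N = false by lia.
  rewrite hf in e1.
  have : ((y1 * tperm i' j)^-1 (inord a) < (y1 * tperm i' j)^-1 (inord a.+1))%N.
    rewrite -ei -/i' invMg !permM tpermV tpermL tpermD; last first.
    + apply/eqP => /(congr1 (@nat_of_ord _)); rewrite ?vi' /a; lia.
    + by apply/eqP => /(congr1 (@nat_of_ord _)); rewrite ?vi' /a; lia.
    rewrite /y1 invMg !permM sigmaV si sj.
    exact: ltn_trans h lt.
  move/(length_sigma_up an) => ->.
  by rewrite ltnS -e1.
Qed.

Lemma F2' n (y : {perm 'I_n.+1}) (i j : 'I_n.+1) : (i < j)%N ->
  (y^-1 i < y^-1 j)%N -> perm_length n y < perm_length n (y * tperm i j).
Proof.
move=> ij; apply: (@F2 n (j - i).-1); lia.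
Qed.

Lemma F2iff n (y : {perm 'I_n.+1}) (i j : 'I_n.+1) : (i < j)%N ->
  (perm_length n y < perm_length n (y * tperm i j)) = (y^-1 i < y^-1 j)%N.
Proof.
move=> ij; apply/idP/idP; last exact: F2'.
move=> h; apply/negPn/negP => h'.
have ne : y^-1 i != y^-1 j.
  by apply/eqP => /perm_inj e; move: ij; rewrite e ltnn.
have lt : (y^-1 j < y^-1 i)%N by move/ord_neq: ne; lia.
set y' := y * tperm i j.
have : (y'^-1 i < y'^-1 j)%N by rewrite /y' invMg !permM tpermV tpermL tpermR.
move/(F2' ij); rewrite /y' -mulgA.
have -> : tperm i j * tperm i j = 1 :> {perm 'I_n.+1}.
  by apply/permP => z; rewrite permM tpermK perm1.
rewrite mulg1; lia.
Qed.

Lemma disc_ivt (g : nat -> bool) N : g 0 -> ~~ g N -> exists m, m < N /\ g m /\ ~~ g m.+1.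
Proof.
elim: N => [->//|N IH] g0 gN.
case gN': (g N).
  by exists N; rewrite gN'.
have [m [mN [gm gm1]]] := IH g0 (negbT gN').
by exists m; split => //; apply: ltnW.
Qed.

Lemma tpermKK (T : finType) (x y : T) : tperm x y * tperm x y = 1.
Proof. by apply/permP => z; rewrite permM tpermK perm1. Qed.

Lemma exchange n t (i j : 'I_n.+1) : valid_word n t -> (i < j)%N ->
  ((word_perm n t)^-1 j < (word_perm n t)^-1 i)%N ->
  exists k, k < size t /\ word_perm n t * tperm i j = word_perm n (take k t ++ drop k.+1 t).
Proof.
move=> vt ij h.
pose z m := word_perm n (drop m t).
pose g m := ((z m)^-1 j < (z m)^-1 i)%N.
have g0 : g 0 by rewrite /g /z drop0.
have gN : ~~ g (size t) by rewrite /g /z drop_size word_perm_nil invg1 !perm1 -leqNgt ltnW.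
have [m [mN [gm gm1]]] := disc_ivt g0 gN.
exists m; split => //.
set c := nth 0 t m.
have cn : c < n by move/allP: vt; apply; rewrite mem_nth.
have ed : drop m t = c :: drop m.+1 t by rewrite /c -drop_nth.
set z' := word_perm n (drop m.+1 t).
have zm : z m = sigma n c * z' by rewrite /z ed word_perm_cons.
have ne : z'^-1 i != z'^-1 j.
  by apply/eqP => /perm_inj e; move: ij; rewrite e ltnn.
have PQ : (z'^-1 i < z'^-1 j)%N.
  by move: gm1; rewrite /g -/z' => /negP gm1; move/ord_neq: ne => /orP[//|/gm1].
have sQP : (sigma n c (z'^-1 j) < sigma n c (z'^-1 i))%N.
  by move: gm; rewrite /g zm invMg !permM sigmaV.
have [eP eQ] := flip cn PQ sQP.
have sig : sigma n c = z' * tperm i j * z'^-1.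
  have := tpermJ i j z'^-1; rewrite /conjg invgK mulgA => ->.
  by rewrite /sigma -eP -eQ.
have -> : word_perm n t = word_perm n (take m t) * (sigma n c * z').
  by rewrite -{1}(cat_take_drop m t) word_perm_cat ed word_perm_cons.
rewrite word_perm_cat -!mulgA; congr (_ * _).
by rewrite sig -!mulgA mulKg tpermKK mulg1.
Qed.

Lemma valid_subseq n t' t : subseq t' t -> valid_word n t -> valid_word n t'.
Proof.
move=> st /allP vt; apply/allP => x xt; apply: vt; exact: (mem_subseq st).
Qed.

Lemma subseq_del (T : eqType) (t : seq T) k : subseq (take k t ++ drop k.+1 t) t.
Proof.
rewrite -{3}(cat_take_drop k t); apply: cat_subseq => //.
by rewrite -add1n -drop_drop drop_subseq.
Qed.

Lemma size_del (T : eqType) (t : seq T) k : k < size t -> size (take k t ++ drop k.+1 t) = (size t).-1.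
Proof. move=> kt; rewrite size_cat size_take size_drop kt; lia. Qed.

Lemma step_down n (y z : {perm 'I_n.+1}) t : bruhat_step n y z -> valid_word n t ->
  word_perm n t = z -> exists t', subseq t' t /\ word_perm n t' = y.
Proof.
move=> [i [j [ij [ez lt]]]] vt et.
wlog ltij : i j ij ez / (i < j)%N.
  move=> H; move/ord_neq: (ij) => /orP[h|h]; first exact: (H i j).
  apply: (H j i) => //; first by rewrite eq_sym.
  by rewrite tpermC.
have ey : y = z * tperm i j by rewrite ez -mulgA tpermKK mulg1.
have h : ~~ (z^-1 i < z^-1 j)%N.
  by rewrite -F2iff // -ey -leqNgt ltnW.
have hz : (z^-1 j < z^-1 i)%N.
  have : z^-1 i != z^-1 j by apply/eqP => /perm_inj /eqP; rewrite (negbTE ij).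
  by move/ord_neq => /orP[h'|//]; rewrite h' in h.
rewrite -et in hz.
have [k [kt ek]] := exchange vt ltij hz.
exists (take k t ++ drop k.+1 t); split; first exact: subseq_del.
by rewrite -ek et ey.
Qed.

Lemma subword_of_le n (x w : {perm 'I_n.+1}) : bruhat_le n x w ->
  forall t, valid_word n t -> word_perm n t = w ->
  exists t', subseq t' t /\ word_perm n t' = x.
Proof.
move=> h0; have h := clos_rt_rtn1 _ _ _ _ h0; clear h0.
elim: h => [|y z st _ IH] t vt et.
  by exists t.
have [t'' [s1 e1]] := step_down st vt et.
have [t' [s2 e2]] := IH t'' (valid_subseq s1 vt) e1.
by exists t'; split => //; exact: subseq_trans s2 s1.
Qed.

Lemma claimZ n (y z : {perm 'I_n.+1}) a : a < n -> bruhat_step n y z ->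
  y * sigma n a = z \/ bruhat_step n (y * sigma n a) (z * sigma n a).
Proof.
move=> an [i [j [ij [ez lt]]]].
wlog ltij : i j ij ez / (i < j)%N.
  move=> H; move/ord_neq: (ij) => /orP[h|h]; first exact: (H i j).
  apply: (H j i) => //; first by rewrite eq_sym.
  by rewrite tpermC.
have h : (y^-1 i < y^-1 j)%N by rewrite -F2iff // -ez.
set s := sigma n a.
have ezs : z * s = (y * s) * tperm (s i) (s j).
  have := tpermJ i j s; rewrite /conjg /s sigmaV => <-.
  by rewrite ez /s !mulgA -(mulgA y (sigma n a)) sigmaK mulg1.
have sij : s i != s j by apply/eqP => /perm_inj /eqP; rewrite (negbTE ij).
have hs : ((y * s)^-1 (s i) < (y * s)^-1 (s j))%N.
  by rewrite invMg !permM /s sigmaV /sigma !tpermK.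
move/ord_neq: sij => /orP[h1|h1].
- right; exists (s i), (s j); split.
    by apply/eqP => e; move: h1; rewrite e ltnn.
  by split => //; rewrite ezs F2iff.
- left; have [e1 e2] := flip an ltij h1.
  by rewrite ez /s /sigma e1 e2.
Qed.

Lemma LL n (x w : {perm 'I_n.+1}) a : a < n -> bruhat_le n x w ->
  bruhat_le n (x * sigma n a) (w * sigma n a) \/ bruhat_le n (x * sigma n a) w.
Proof.
move=> an h0; have h := clos_rt_rt1n _ _ _ _ h0; clear h0.
elim: h => [y|x0 y z st h1 IH].
  by left; rewrite /bruhat_le; apply: rt_refl.
have yz : bruhat_le n y z.
  exact: clos_rt1n_rt h1.
case: (claimZ an st) => [e|st'].
  by right; rewrite e.
case: IH => h.
  by left; apply: rt_trans (rt_step _ _ _ _ st') h.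
by right; apply: rt_trans (rt_step _ _ _ _ st') h.
Qed.

Lemma subseq_rcons_case (T : eqType) (t s : seq T) c : subseq t (rcons s c) ->
  subseq t s \/ exists t'', t = rcons t'' c /\ subseq t'' s.
Proof.
rewrite -subseq_rev rev_rcons.
case et: (rev t) => [|x r].
  move=> _; left; have -> : t = [::] by rewrite -(revK t) et.
  exact: sub0seq.
rewrite /=; case: eqP => [e|_] h.
  subst x.
  right; exists (rev r); split.
    by rewrite -rev_cons -et revK.
  by rewrite -subseq_rev revK.
by left; rewrite -subseq_rev et.
Qed.

Lemma sigma_step n (y : {perm 'I_n.+1}) c : c < n ->
  perm_length n y < perm_length n (y * sigma n c) -> bruhat_step n y (y * sigma n c).
Proof.
move=> cn lt; exists (inord c), (inord c.+1); split => //.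
apply/eqP => /(congr1 (@nat_of_ord _)); rewrite (inordA cn) (inordB cn); lia.
Qed.

Lemma le_of_subword n s : reduced n s -> forall t, subseq t s ->
  bruhat_le n (word_perm n t) (word_perm n s).
Proof.
elim/last_ind: s => [|s c IH] [vs ls] t.
  by rewrite subseq0 => /eqP ->; apply: rt_refl.
move: vs; rewrite /valid_word all_rcons => /andP[cn vs].
have l1 := length_word vs.
have l2 := length_sigma_le (word_perm n s) cn.
rewrite word_perm_rcons size_rcons in ls.
have rs : reduced n s by split => //; lia.
have up : perm_length n (word_perm n s) < perm_length n (word_perm n s * sigma n c) by lia.
have st := sigma_step cn up.
rewrite word_perm_rcons.
case/subseq_rcons_case => [h|[t'' [-> h]]].
  apply: rt_trans (IH rs t h) _; exact: rt_step.
rewrite word_perm_rcons.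
case: (LL cn (IH rs t'' h)) => // h'.
apply: rt_trans h' _; exact: rt_step.
Qed.

Lemma del n t : valid_word n t -> perm_length n (word_perm n t) = size t \/
  exists t', subseq t' t /\ word_perm n t' = word_perm n t /\ size t' < size t.
Proof.
elim/last_ind: t => [|t c IH].
  by move=> _; left; apply/eqP; rewrite -leqn0; apply: length_word.
rewrite /valid_word all_rcons => /andP[cn vt].
case: (IH vt) => [e|[t' [s' [e' lt']]]]; last first.
  right; exists (rcons t' c); split.
    by rewrite -!cats1; apply: cat_subseq.
  by rewrite !word_perm_rcons e' !size_rcons.
have := length_sigma (word_perm n t) cn.
case: ifP => h.
  by rewrite word_perm_rcons size_rcons e => ->; left.
move=> _.
have ne : (word_perm n t)^-1 (inord c) != (word_perm n t)^-1 (inord c.+1).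
  apply/eqP => /perm_inj /(congr1 (@nat_of_ord _)).
  rewrite (inordA cn) (inordB cn); lia.
have h' : ((word_perm n t)^-1 (inord c.+1) < (word_perm n t)^-1 (inord c))%N.
  by move/ord_neq: ne => /orP[h'|//]; rewrite h' in h.
have ic : ((inord c : 'I_n.+1) < (inord c.+1 : 'I_n.+1))%N.
  by rewrite (inordA cn) (inordB cn).
have [k [kt ek]] := exchange vt ic h'.
right; exists (take k t ++ drop k.+1 t); split.
  apply: subseq_trans (subseq_del t k) _; exact: subseq_rcons.
split; first by rewrite word_perm_rcons -ek.
by rewrite size_rcons size_del // ltnS leq_pred.
Qed.

Lemma red_exists n t : valid_word n t -> exists t', subseq t' t /\
  word_perm n t' = word_perm n t /\ size t' = perm_length n (word_perm n t).
Proof.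
move: {2}(size t) (leqnn (size t)) => N; elim: N t => [|N IH] t.
  rewrite leqn0 => /nilP -> _; exists [::]; split => //; split => //.
  by rewrite word_perm_nil; apply/esym/eqP; rewrite -leqn0 -(word_perm_nil n) length_word.
move=> tN vt.
case: (del vt) => [e|[t' [s' [e' lt']]]].
  by exists t.
have [t'' [s'' [e'' l'']]] := IH t' (leq_trans lt' tN) (valid_subseq s' vt).
exists t''; split; first exact: subseq_trans s'' s'.
by rewrite e'' l'' e'.
Qed.

Lemma sigma_le n c k (z : 'I_n.+1) : c < n -> c != k -> (z <= k)%N -> (sigma n c z <= k)%N.
Proof.
move=> cn ck zk; rewrite /sigma.
case: tpermP => [e|e|//].
  by move: zk ck; rewrite e (inordA cn) (inordB cn); lia.
by move: zk; rewrite e (inordA cn) (inordB cn); lia.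
Qed.

Lemma preserve n t k : valid_word n t -> k \notin t ->
  forall z : 'I_n.+1, (z <= k)%N -> (word_perm n t z <= k)%N.
Proof.
elim: t => [|c t IH] vt kt z zk; first by rewrite word_perm_nil perm1.
move: vt => /andP[cn vt]; move: kt; rewrite in_cons negb_or => /andP[ck kt].
rewrite word_perm_cons permM; apply: IH => //.
by apply: sigma_le; rewrite // eq_sym.
Qed.

Lemma le_id n (p : {perm 'I_n.+1}) : (forall z : 'I_n.+1, (p z <= z)%N) -> p = 1.
Proof.
move=> h; apply/permP => z; rewrite perm1.
move: {2}(nat_of_ord z) (leqnn z) => N; elim: N z => [|N IH] z zN.
  by apply/val_inj; move: (h z) zN; rewrite /=; lia.
case: (ltngtP (p z) z) => [lt|gt|e]; last exact: val_inj.
- exfalso.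
  have e : p (p z) = p z by apply: IH; lia.
  by move: lt; rewrite (perm_inj e) ltnn.
- by move: (h z); rewrite leqNgt gt.
Qed.

Definition overw n (P : pred nat) t := valid_word n t && all P t.

Lemma overw_subseq n P t t' : subseq t' t -> overw n P t -> overw n P t'.
Proof.
move=> st /andP[vt at_]; apply/andP; split; first exact: valid_subseq st vt.
apply/allP => x xt; move/allP: at_; apply; exact: (mem_subseq st xt).
Qed.

Lemma overw_cat n P t1 t2 : overw n P (t1 ++ t2) = overw n P t1 && overw n P t2.
Proof. by rewrite /overw /valid_word !all_cat; case: (all _ t1); case: (all _ t1); case: (all _ t2); case: (all _ t2). Qed.

Lemma overw_rev n P t : overw n P (rev t) = overw n P t.
Proof. by rewrite /overw /valid_word !all_rev. Qed.

Lemma trivial_int n (X Y : pred nat) tX tY : (forall i, ~ (X i /\ Y i)) ->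
  overw n X tX -> overw n Y tY -> word_perm n tX = word_perm n tY -> word_perm n tX = 1.
Proof.
move=> dis /andP[vX aX] /andP[vY aY] e.
apply: le_id => z.
case kX : (nat_of_ord z \in tX).
  have kY : nat_of_ord z \notin tY.
    apply/negP => kY; apply: (dis z); split.
      by move/allP: aX; apply.
    by move/allP: aY; apply.
  by rewrite e; apply: preserve.
by apply: preserve => //; rewrite kX.
Qed.

Lemma uniq_dec n (X Y : pred nat) t1 t2 t1' t2' : (forall i, ~ (X i /\ Y i)) ->
  overw n X t1 -> overw n Y t2 -> overw n X t1' -> overw n Y t2' ->
  word_perm n t1 * word_perm n t2 = word_perm n t1' * word_perm n t2' ->
  word_perm n t1 = word_perm n t1' /\ word_perm n t2 = word_perm n t2'.
Proof.
move=> dis o1 o2 o1' o2' E.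
set a := word_perm n t1; set b := word_perm n t2.
set a' := word_perm n t1'; set b' := word_perm n t2'.
have E' : a'^-1 * a = b' * b^-1.
  apply: (mulgI a'); rewrite mulKVg; apply: (mulIg b).
  by rewrite -!mulgA mulVg mulg1; exact: E.
have : word_perm n (rev t1' ++ t1) = 1.
  apply: (@trivial_int n X Y _ (t2' ++ rev t2)) => //.
  - by rewrite overw_cat overw_rev o1' o1.
  - by rewrite overw_cat overw_rev o2' o2.
  by rewrite !word_perm_cat !word_perm_rev.
rewrite word_perm_cat word_perm_rev -/a -/a' => h.
have ea : a = a' by rewrite -(mulKVg a' a) h mulg1.
split => //.
by apply: (mulgI a); rewrite {2}ea; exact: E.
Qed.

Lemma split_subseq (T : eqType) (t s1 s2 : seq T) : subseq t (s1 ++ s2) ->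
  exists t1 t2, t = t1 ++ t2 /\ subseq t1 s1 /\ subseq t2 s2.
Proof.
case/subseqP => m sm ->.
exists (mask (take (size s1) m) s1), (mask (drop (size s1) m) s2); split.
  rewrite -mask_cat ?cat_take_drop //.
  by rewrite size_take size_cat in sm *; rewrite sm; case: ltnP; lia.
by split; apply: mask_subseq.
Qed.

Lemma additive n (X Y : pred nat) r1 r2 : (forall i, ~ (X i /\ Y i)) ->
  overw n X r1 -> overw n Y r2 -> reduced n r1 -> reduced n r2 -> reduced n (r1 ++ r2).
Proof.
move=> dis o1 o2 [v1 l1] [v2 l2].
have v12 : valid_word n (r1 ++ r2) by rewrite /valid_word all_cat; apply/andP.
split => //.
have [r [sr [er lr]]] := red_exists v12.
have [q1 [q2 [eq [s1 s2]]]] := split_subseq sr.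
have oq1 := overw_subseq s1 o1; have oq2 := overw_subseq s2 o2.
have [e1 e2] : word_perm n q1 = word_perm n r1 /\ word_perm n q2 = word_perm n r2.
  apply: (uniq_dec dis) => //.
  by rewrite -!word_perm_cat -eq.
have h1 := length_word (valid_subseq s1 v1).
have h2 := length_word (valid_subseq s2 v2).
rewrite e1 in h1; rewrite e2 in h2.
have := length_word v12.
have := size_subseq sr.
move: lr l1 l2 h1 h2; rewrite eq !size_cat.
move: (size q1) (size q2) (size r1) (size r2) (perm_length n (word_perm n r1)) (perm_length n (word_perm n r2)) (perm_length n (word_perm n (r1 ++ r2))).
move=> *; lia.
Qed.

Lemma sig_eq (T : Type) (P : T -> Prop) (x y : {z | P z}) : sval x = sval y -> x = y.
Proof.
case: x => x px; case: y => y py /= e; subst y; f_equal; apply: proof_irrelevance.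
Qed.

Lemma iso_main n (X Y : pred nat) sX sY : (forall i, ~ (X i /\ Y i)) ->
  overw n X sX -> overw n Y sY -> reduced n sX -> reduced n sY ->
  poset_iso_prod n (word_perm n sX * word_perm n sY) (word_perm n sX) (word_perm n sY).
Proof.
move=> dis oX oY rX rY.
set u := word_perm n sX; set v := word_perm n sY.
have vX : valid_word n sX by case/andP: oX.
have vY : valid_word n sY by case/andP: oY.
have rw := additive dis oX oY rX rY.
have wX : forall a, bruhat_le n a u -> exists t, overw n X t /\ word_perm n t = a.
  move=> a h; have [t [st et]] := subword_of_le h vX erefl.
  by exists t; split => //; exact: overw_subseq st oX.
have wY : forall b, bruhat_le n b v -> exists t, overw n Y t /\ word_perm n t = b.
  move=> b h; have [t [st et]] := subword_of_le h vY erefl.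
  by exists t; split => //; exact: overw_subseq st oY.
have uniq : forall a b a' b', bruhat_le n a u -> bruhat_le n b v ->
    bruhat_le n a' u -> bruhat_le n b' v -> a * b = a' * b' -> a = a' /\ b = b'.
  move=> a b a' b' ha hb ha' hb' e.
  have [ta [ota eta]] := wX _ ha; have [tb [otb etb]] := wY _ hb.
  have [ta' [ota' ea']] := wX _ ha'; have [tb' [otb' eb']] := wY _ hb'.
  rewrite -eta -etb -ea' -eb' in e *; exact: uniq_dec dis ota otb ota' otb' e.
have comp : forall a b, bruhat_le n a u -> bruhat_le n b v -> bruhat_le n (a * b) (u * v).
  move=> a b ha hb.
  have [ta [sa ea]] := subword_of_le ha vX erefl.
  have [tb [sb eb]] := subword_of_le hb vY erefl.
  rewrite -ea -eb -word_perm_cat /u /v -word_perm_cat.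
  apply: le_of_subword => //; exact: cat_subseq.
have dec : forall x, bruhat_le n x (u * v) -> exists a b,
    bruhat_le n a u /\ bruhat_le n b v /\ a * b = x.
  move=> x h.
  have vw : valid_word n (sX ++ sY) by case: rw.
  have [t [st et]] := subword_of_le h vw (word_perm_cat n sX sY).
  have [t1 [t2 [e [s1 s2]]]] := split_subseq st.
  exists (word_perm n t1), (word_perm n t2); split; first exact: le_of_subword.
  split; first exact: le_of_subword.
  by rewrite -word_perm_cat -e.
have ord : forall a b a' b', bruhat_le n a u -> bruhat_le n b v ->
    bruhat_le n a' u -> bruhat_le n b' v ->
    (bruhat_le n (a * b) (a' * b') <-> bruhat_le n a a' /\ bruhat_le n b b').
  move=> a b a' b' ha hb ha' hb'.
  have [r1 [or1 er1]] := wX _ ha'; have [r2 [or2 er2]] := wY _ hb'.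
  have vr1 : valid_word n r1 by case/andP: or1.
  have vr2 : valid_word n r2 by case/andP: or2.
  have [r1' [s1 [e1 l1]]] := red_exists vr1.
  have [r2' [s2 [e2 l2]]] := red_exists vr2.
  have or1' := overw_subseq s1 or1; have or2' := overw_subseq s2 or2.
  have vr1' : valid_word n r1' by case/andP: or1'.
  have vr2' : valid_word n r2' by case/andP: or2'.
  have rr1 : reduced n r1' by split => //; rewrite l1 e1.
  have rr2 : reduced n r2' by split => //; rewrite l2 e2.
  have rr := additive dis or1' or2' rr1 rr2.
  have ea' : word_perm n r1' = a' by rewrite e1.
  have eb' : word_perm n r2' = b' by rewrite e2.
  split.
  - move=> h.
    have vw : valid_word n (r1' ++ r2') by case: rr.
    have [t [st et]] := subword_of_le h vw (etrans (word_perm_cat n r1' r2') (congr2 _ ea' eb')).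
    have [t1 [t2 [e [st1 st2]]]] := split_subseq st.
    have [ta [ota eta]] := wX _ ha; have [tb [otb etb]] := wY _ hb.
    have [h1 h2] : word_perm n ta = word_perm n t1 /\ word_perm n tb = word_perm n t2.
      apply: (uniq_dec dis) => //; try exact: overw_subseq st1 or1'; try exact: overw_subseq st2 or2'.
      by rewrite eta etb -word_perm_cat -e.
    split.
      by rewrite -eta h1 -ea'; apply: le_of_subword.
    by rewrite -etb h2 -eb'; apply: le_of_subword.
  - move=> [h1 h2].
    have [t1 [st1 et1]] := subword_of_le h1 vr1' ea'.
    have [t2 [st2 et2]] := subword_of_le h2 vr2' eb'.
    rewrite -et1 -et2 -ea' -eb' -!word_perm_cat.
    apply: le_of_subword => //; exact: cat_subseq.
have ex : forall x : Bideal n (u * v), exists p : (Bideal n u * Bideal n v)%type,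
    sval p.1 * sval p.2 = sval x.
  move=> [x hx]; have [a [b [ha [hb e]]]] := dec x hx.
  by exists (exist (fun z => bruhat_le n z u) a ha, exist (fun z => bruhat_le n z v) b hb).
pose f := fun x => sval (constructive_indefinite_description _ (ex x)).
have fE : forall x, sval (f x).1 * sval (f x).2 = sval x.
  by move=> x; rewrite /f; case: (constructive_indefinite_description _ (ex x)).
pose g := fun p : (Bideal n u * Bideal n v)%type =>
  exist (fun x => bruhat_le n x (u * v)) (sval p.1 * sval p.2) (comp _ _ (svalP p.1) (svalP p.2)).
exists f; split.
  exists g.
    by move=> x; apply: sig_eq; rewrite /g /= fE.
  move=> [p1 p2]; have := fE (g (p1, p2)).
  case: (f (g (p1, p2))) => q1 q2 /= e.
  have [e1 e2] := uniq _ _ _ _ (svalP q1) (svalP q2) (svalP p1) (svalP p2) e.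
  by congr pair; apply: sig_eq.
move=> x y; rewrite -(fE x) -(fE y).
exact: (ord _ _ _ _ (svalP (f x).1) (svalP (f x).2) (svalP (f y).1) (svalP (f y).2)).
Qed.

Lemma inord_neq n a b : a <= n -> b <= n -> a != b -> (inord a : 'I_n.+1) != inord b.
Proof.
move=> an bn ab; apply/eqP => /(congr1 (@nat_of_ord _)).
by rewrite !inordK // => e; rewrite e eqxx in ab.
Qed.

Lemma sigma_comm n x c : x < n -> c < n -> commuting x c ->
  sigma n x * sigma n c = sigma n c * sigma n x.
Proof.
move=> xn cn [h1 h2].
case: (eqVneq x c) => [->//|xc].
have d1 : (inord x : 'I_n.+1) != inord c := inord_neq (ltnW xn) (ltnW cn) xc.
have d2 : (inord x.+1 : 'I_n.+1) != inord c := inord_neq xn (ltnW cn) (introN eqP h1).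
have d3 : (inord x : 'I_n.+1) != inord c.+1 by apply: inord_neq (ltnW xn) cn _; apply/eqP => e; apply: h2.
have d4 : (inord x.+1 : 'I_n.+1) != inord c.+1 by apply: inord_neq xn cn _; rewrite eqSS.
have h : sigma n c ^ sigma n x = sigma n c.
  by rewrite /sigma tpermJ !tpermD.
move: h; rewrite /conjg sigmaV => h.
by rewrite -[in RHS]h -!mulgA sigmaK mulg1.
Qed.

Lemma comm_word n c t : c < n -> valid_word n t -> (forall x, x \in t -> commuting x c) ->
  sigma n c * word_perm n t = word_perm n t * sigma n c.
Proof.
move=> cn; elim: t => [|x t IH]; first by rewrite word_perm_nil mulg1 mul1g.
move=> /andP[xn vt] H.
have e1 : sigma n c * sigma n x = sigma n x * sigma n c.
  by rewrite (sigma_comm xn cn) //; apply: H; rewrite mem_head.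
have e2 : sigma n c * word_perm n t = word_perm n t * sigma n c.
  by apply: IH => // y yt; apply: H; rewrite in_cons yt orbT.
by rewrite word_perm_cons mulgA e1 -mulgA e2 mulgA.
Qed.

Lemma split_word n (X Y : pred nat) s : valid_word n s ->
  (forall c, c \in s -> X c \/ Y c) -> (forall i, ~ (X i /\ Y i)) ->
  (forall p q, p < q -> q < size s -> Y (nth 0 s p) -> X (nth 0 s q) ->
     commuting (nth 0 s q) (nth 0 s p)) ->
  word_perm n s = word_perm n (filter X s) * word_perm n (filter Y s).
Proof.
move=> + + dis; elim: s => [|c s IH]; first by rewrite !word_perm_nil mulg1.
move=> /andP[cn vs] L C.
have IH' := IH vs (fun x xs => L x (@mem_behead _ (c :: s) x xs))
  (fun p q pq qs yp xq => C p.+1 q.+1 pq qs yp xq).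
rewrite /= word_perm_cons IH'.
case Xc : (X c).
  have Yc : Y c = false by apply/negP => Yc; apply: (dis c); split.
  by rewrite Yc word_perm_cons mulgA.
have Yc : Y c by case: (L c (mem_head _ _)); rewrite ?Xc.
rewrite Yc word_perm_cons !mulgA comm_word //.
  by apply: valid_subseq vs; apply: filter_subseq.
move=> x; rewrite mem_filter => /andP[Xx xs].
have := C 0 (index x s).+1 erefl; rewrite /= ltnS index_mem nth_index //.
by apply.
Qed.

Lemma subadd n t1 t2 : valid_word n t1 -> valid_word n t2 ->
  perm_length n (word_perm n t1 * word_perm n t2) <=
  perm_length n (word_perm n t1) + perm_length n (word_perm n t2).
Proof.
move=> v1 v2.
have [r1 [s1 [e1 l1]]] := red_exists v1.
have [r2 [s2 [e2 l2]]] := red_exists v2.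
rewrite -l1 -l2 -e1 -e2 -size_cat -word_perm_cat; apply: length_word.
rewrite /valid_word all_cat; apply/andP; split.
  exact: valid_subseq s1 v1.
exact: valid_subseq s2 v2.
Qed.

Local Close Scope group_scope.

Theorem lemma3p2 (n : nat) (w : {perm 'I_n.+1}) (X Y : pred nat) (s : seq nat) :
  (forall i, supp n w i <-> (X i \/ Y i)) ->
  (forall i, ~ (X i /\ Y i)) ->
  reduced_word_of n s w ->
  ((forall x y, X x -> Y y -> commuting x y)
   \/
   (exists x0 y0, X x0 /\ Y y0 /\ ~ commuting x0 y0 /\
      (forall x y, X x -> Y y -> ~ commuting x y -> x = x0 /\ y = y0) /\
      (forall p q, p < size s -> q < size s ->
         nth 0 s p = x0 -> nth 0 s q = y0 -> p < q))) ->
  reduced n (filter X s) /\ reduced n (filter Y s) /\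
  poset_iso_prod n w (word_perm n (filter X s)) (word_perm n (filter Y s)).
Proof.
move=> Hsupp dis [[Hv Hl] Hw] Hcase.
have L : forall c, c \in s -> X c \/ Y c.
  move=> c cs; apply/(Hsupp c); exists s; split => //.
have C : forall p q, p < q -> q < size s -> Y (nth 0 s p) -> X (nth 0 s q) ->
     commuting (nth 0 s q) (nth 0 s p).
  move=> p q pq qs yp xq.
  case: Hcase => [H|[x0 [y0 [_ [_ [_ [Hu Ho]]]]]]]; first exact: H.
  case: (classic (commuting (nth 0 s q) (nth 0 s p))) => // nc.
  have [e1 e2] := Hu _ _ xq yp nc.
  have := Ho q p qs (ltn_trans pq qs) e1 e2; lia.
have ew := split_word Hv L dis C.
set sX := filter X s; set sY := filter Y s.
have vX : valid_word n sX by apply: valid_subseq Hv; apply: filter_subseq.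
have vY : valid_word n sY by apply: valid_subseq Hv; apply: filter_subseq.
have oX : overw n X sX by rewrite /overw vX filter_all.
have oY : overw n Y sY by rewrite /overw vY filter_all.
have cU : count (predU X Y) s = size s.
  apply/eqP; rewrite -all_count; apply/allP => c cs /=.
  by case: (L c cs) => ->; rewrite ?orbT.
have cI : count (predI X Y) s = 0.
  rewrite (@eq_in_count _ _ pred0) ?count_pred0 // => c cs /=.
  by apply/negP => /andP[h1 h2]; apply: (dis c); split.
have sz : size sX + size sY = size s.
  by rewrite !size_filter -count_predUI cU cI addn0.
have lX := length_word vX; have lY := length_word vY.
have lw := subadd vX vY.
rewrite -ew Hw in lw.
rewrite Hw in Hl.
have rX : reduced n sX by split => //; lia.
have rY : reduced n sY by split => //; lia.
split => //; split => //.
rewrite -Hw ew; exact: iso_main.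
Qed.
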